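(* Let $\mathsf{M}$ be the subspace of $\ell_1$ with underlying set $\{x \in \prod_{i\in\mathbb{N}} M_i : \sum_{i\in\mathbb{N}} |x(i)| < \infty\}$, where $M_i = \{ j\cdot 2^{-i} \mid j \in \{0,\dots,2^i\}\}$. Then the unit ball $B_{\mathsf{M}}(0^\omega;1) := \{x \in \mathsf{M} : \|x\|_1 < 1\}$ does not contain any clopen (in $\mathsf{M}$) neighbourhood of the constant zero sequence $0^\omega$.
   Context: $\ell_1$ is the set of real sequences $x\in\mathbb{R}^{\mathbb{N}}$ with $\|x\|_1=\sum_{i\in\mathbb{N}}|x(i)|<\infty$, equipped with the topology induced by the metric $(x,y)\mapsto \|x-y\|_1$. $\mathsf{M}$ carries the subspace topology from $\ell_1$. *)

(* Defs.v *)
From Stdlib Require Import Reals.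
From Coquelicot Require Import Coquelicot.
Open Scope R_scope.

Definition Mi (i : nat) (r : R) : Prop :=
  exists j : nat, (j <= 2 ^ i)%nat /\ r = INR j / 2 ^ i.

Definition in_l1 (x : nat -> R) : Prop := ex_series (fun i => Rabs (x i)).

Definition norm1 (x : nat -> R) : R := Series (fun i => Rabs (x i)).

Definition dist1 (x y : nat -> R) : R := norm1 (fun i => x i - y i).

Definition inM (x : nat -> R) : Prop := (forall i, Mi i (x i)) /\ in_l1 x.

Definition openM (U : (nat -> R) -> Prop) : Prop :=
  forall x, U x -> exists eps, 0 < eps /\
    forall y, inM y -> dist1 x y < eps -> U y.

Definition closedM (U : (nat -> R) -> Prop) : Prop :=
  openM (fun x => inM x /\ ~ U x).

Definition zero_seq : nat -> R := fun _ => 0.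

(* Main.v *)
Require Import Defs.
From Stdlib Require Import Reals Lra Lia ClassicalEpsilon FunctionalExtensionality.
From Coquelicot Require Import Coquelicot.
Open Scope R_scope.

Lemma series_lim (a : nat -> R) l : is_series a l <-> is_lim_seq (sum_n a) l.
Proof. split; intro H; exact H. Qed.

Lemma sum_n_stable (a : nat -> R) N : (forall i, (N < i)%nat -> a i = 0) ->
  forall m, (N <= m)%nat -> sum_n a m = sum_n a N.
Proof.
  intros Ha m Hm. induction Hm. reflexivity.
  rewrite sum_Sn, IHHm, Ha by lia. unfold plus; simpl; ring.
Qed.

Lemma fin_series (a : nat -> R) N : (forall i, (N < i)%nat -> a i = 0) ->
  is_series a (sum_n a N).
Proof.
  intros Ha. apply series_lim.
  apply is_lim_seq_ext_loc with (fun _ => sum_n a N).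
  exists N. intros m Hm. symmetry. apply sum_n_stable; auto.
  apply is_lim_seq_const.
Qed.

Lemma sum_n_mono (a : nat -> R) : (forall i, 0 <= a i) -> forall k m, (k <= m)%nat -> sum_n a k <= sum_n a m.
Proof.
  intros Ha k m Hm. induction Hm. lra.
  rewrite sum_Sn. unfold plus; simpl. specialize (Ha (S m)). lra.
Qed.

Lemma partial_le (a : nat -> R) l : (forall i, 0 <= a i) -> is_series a l -> forall k, sum_n a k <= l.
Proof.
  intros Ha Hs k. apply series_lim in Hs.
  assert (H2 : is_lim_seq (fun n => sum_n a (n + k)) l).
  { apply is_lim_seq_incr_n. exact Hs. }
  assert (H3 := is_lim_seq_le (fun _ => sum_n a k) (fun n => sum_n a (n + k)) (sum_n a k) l).
  simpl in H3. apply H3. intros n. apply sum_n_mono; auto; lia.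
  apply is_lim_seq_const. exact H2.
Qed.

Lemma single_sum n c m : sum_n (fun i => if Nat.eqb i n then c else 0) m = if Nat.ltb m n then 0 else c.
Proof.
  induction m.
  - rewrite sum_O. destruct n; simpl; reflexivity.
  - rewrite sum_Sn, IHm. change plus with Rplus.
    destruct (Nat.ltb_spec m n), (Nat.ltb_spec (S m) n), (Nat.eqb_spec (S m) n); try lia; compute; ring.
Qed.

Lemma single_series n c : is_series (fun i => if Nat.eqb i n then c else 0) c.
Proof.
  apply series_lim. apply is_lim_seq_ext_loc with (fun _ => c).
  exists n. intros m Hm. rewrite single_sum. destruct (Nat.ltb_spec m n); [lia|auto].
  apply is_lim_seq_const.
Qed.

Lemma ex_abs_diff (a b : nat -> R) : ex_series (fun i => Rabs (a i)) -> ex_series (fun i => Rabs (b i)) ->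
  ex_series (fun i => Rabs (a i - b i)).
Proof.
  intros Ha Hb. apply (@ex_series_le R_AbsRing R_CompleteNormedModule) with (fun i => Rabs (a i) + Rabs (b i)).
  intros n. change norm with Rabs. rewrite Rabs_Rabsolu.
  unfold Rminus. eapply Rle_trans. apply Rabs_triang. rewrite Rabs_Ropp. lra.
  apply (ex_series_plus _ _ Ha Hb).
Qed.

Lemma dist_triang (a b c : nat -> R) : ex_series (fun i => Rabs (a i)) -> ex_series (fun i => Rabs (b i)) ->
  ex_series (fun i => Rabs (c i)) -> dist1 a c <= dist1 a b + dist1 b c.
Proof.
  intros Ha Hb Hc. unfold dist1, norm1. rewrite <- Series_plus.
  apply Series_le. intros n. split. apply Rabs_pos.
  replace (a n - c n) with ((a n - b n) + (b n - c n)) by ring. apply Rabs_triang.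
  apply (ex_series_plus (fun i => Rabs (a i - b i)) (fun i => Rabs (b i - c i)));
  apply ex_abs_diff; auto.
  apply ex_abs_diff; auto. apply ex_abs_diff; auto.
Qed.

Definition P (U : (nat -> R) -> Prop) (y : nat -> R) (j : nat) : Prop :=
  forall z, inM z -> dist1 y z < / 2 ^ j -> U z.

Fixpoint fsel U y n : nat := match n with
  | O => O
  | S n' => if excluded_middle_informative (P U y (fsel U y n')) then fsel U y n' else S n' end.

Definition vstep U y n : R := if Nat.ltb (fsel U y n) n then / 2 ^ (S (fsel U y n)) else 0.

Fixpoint X U n : nat -> R := match n with
  | O => zero_seq
  | S n' => fun i => if Nat.eqb i n' then vstep U (X U n') n' else X U n' i end.

Definition xl U i := X U (S i) i.

Lemma fsel_le U y n : (fsel U y n <= n)%nat.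
Proof. induction n; simpl. lia. destruct excluded_middle_informative; lia. Qed.

Lemma fsel_P U y n : (fsel U y n < n)%nat -> P U y (fsel U y n).
Proof. induction n; simpl. lia. destruct excluded_middle_informative; auto. lia. Qed.

Lemma fsel_min U y j n : P U y j -> (j <= n)%nat -> (fsel U y n <= j)%nat.
Proof.
  intros Hj. induction n; intros Hn; simpl. lia.
  destruct (Nat.eq_dec j (S n)). { pose proof (fsel_le U y (S n)). simpl in H. lia. }
  specialize (IHn ltac:(lia)).
  destruct excluded_middle_informative as [p|p]. auto.
  destruct (Nat.lt_ge_cases (fsel U y n) n).
  - exfalso; apply p, fsel_P; auto.
  - pose proof (fsel_le U y n). assert (fsel U y n = n) by lia.
    destruct (Nat.eq_dec n j). subst. rewrite H1 in p. contradiction. lia.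
Qed.

Lemma vstep_nonneg U y n : 0 <= vstep U y n.
Proof. unfold vstep. destruct Nat.ltb. left; apply Rinv_0_lt_compat, pow_lt; lra. lra. Qed.

Lemma Mi_vstep U y n : Mi n (vstep U y n).
Proof.
  unfold vstep, Mi. destruct (Nat.ltb_spec (fsel U y n) n).
  - exists (2 ^ (n - S (fsel U y n)))%nat. split.
    apply Nat.pow_le_mono_r; lia.
    rewrite pow_INR. assert (E : 2 ^ n = 2 ^ S (fsel U y n) * 2 ^ (n - S (fsel U y n))).
    { rewrite <- pow_add. f_equal. lia. }
    rewrite E. replace (INR 2) with 2 by (simpl; ring). field. split; apply pow_nonzero; lra.
  - exists 0%nat. split. lia. simpl. field. apply pow_nonzero; lra.
Qed.

Lemma X_eq U n i : X U n i = if Nat.ltb i n then xl U i else 0.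
Proof.
  induction n; simpl. destruct i; reflexivity.
  destruct (Nat.eqb_spec i n). subst. unfold xl. simpl. rewrite Nat.eqb_refl.
  destruct (Nat.ltb_spec n (S n)); [reflexivity|lia].
  rewrite IHn. destruct (Nat.ltb_spec i n), (Nat.ltb_spec i (S n)); auto; lia.
Qed.

Lemma xl_nonneg U i : 0 <= xl U i.
Proof. unfold xl. simpl. rewrite Nat.eqb_refl. apply vstep_nonneg. Qed.

Lemma xl_vstep U i : xl U i = vstep U (X U i) i.
Proof. unfold xl. simpl. rewrite Nat.eqb_refl. reflexivity. Qed.

Lemma X_inM U n : inM (X U n).
Proof.
  split.
  - intros i. rewrite X_eq. destruct Nat.ltb. rewrite xl_vstep. apply Mi_vstep.
    exists 0%nat. split. lia. simpl. field. apply pow_nonzero; lra.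
  - eexists. apply (fin_series _ n). intros i Hi. rewrite X_eq.
    destruct (Nat.ltb_spec i n). lia. apply Rabs_R0.
Qed.

Lemma X_U U : U zero_seq -> forall n, U (X U n).
Proof.
  intros H0 n. induction n. exact H0.
  destruct (Nat.ltb_spec (fsel U (X U n) n) n) as [Hl|Hl].
  - apply (fsel_P U (X U n) n Hl). apply X_inM.
    unfold dist1, norm1.
    rewrite (is_series_unique _ (vstep U (X U n) n)).
    unfold vstep. destruct (Nat.ltb_spec (fsel U (X U n) n) n); [|lia].
    apply Rinv_lt_contravar. apply Rmult_lt_0_compat; apply pow_lt; lra.
    simpl. pose proof (pow_lt 2 (fsel U (X U n) n)). lra.
    eapply is_series_ext; [|apply (single_series n)].
    intros i. simpl. destruct (Nat.eqb_spec i n).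
    subst. rewrite X_eq. destruct (Nat.ltb_spec n n); [lia|].
    rewrite Rminus_0_l, Rabs_Ropp, Rabs_pos_eq; auto. apply vstep_nonneg.
    unfold Rminus. rewrite Rplus_opp_r. symmetry; apply Rabs_R0.
  - replace (X U (S n)) with (X U n); auto.
    apply functional_extensionality. intros i. simpl.
    destruct (Nat.eqb_spec i n); auto. subst. rewrite X_eq.
    unfold vstep. destruct (Nat.ltb_spec n n), (Nat.ltb_spec (fsel U (X U n) n) n); lia || reflexivity.
Qed.

Lemma sum_bound U : (forall x, U x -> norm1 x < 1) -> U zero_seq -> forall k, sum_n (xl U) k < 1.
Proof.
  intros Hn H0 k.
  eapply Rle_lt_trans; [|apply (Hn _ (X_U U H0 (S k)))].
  rewrite (sum_n_ext_loc _ (fun i => Rabs (X U (S k) i))).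
  apply partial_le. intros; apply Rabs_pos. apply Series_correct. apply (X_inM U (S k)).
  intros i Hi. rewrite X_eq. destruct (Nat.ltb_spec i (S k)); [|lia].
  rewrite Rabs_pos_eq; auto. apply xl_nonneg.
Qed.

Lemma xl_ex U : (forall x, U x -> norm1 x < 1) -> U zero_seq -> ex_series (xl U).
Proof.
  intros Hn H0. destruct (ex_finite_lim_seq_incr (sum_n (xl U)) 1) as [l Hl].
  intros n. rewrite sum_Sn. change plus with Rplus. pose proof (xl_nonneg U (S n)). lra.
  intros n. left. apply sum_bound; auto.
  exists l. apply series_lim. exact Hl.
Qed.

Lemma xl_inM U : (forall x, U x -> norm1 x < 1) -> U zero_seq -> inM (xl U).
Proof.
  intros Hn H0. split. intros i. rewrite xl_vstep. apply Mi_vstep.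
  unfold in_l1. destruct (xl_ex U Hn H0) as [l Hl]. exists l.
  eapply is_series_ext; [|exact Hl]. intros i. rewrite Rabs_pos_eq; auto. apply xl_nonneg.
Qed.

Lemma tail_dist U : (forall x, U x -> norm1 x < 1) -> U zero_seq -> forall m,
  dist1 (xl U) (X U (S m)) = Series (xl U) - sum_n (xl U) m.
Proof.
  intros Hn H0 m. unfold dist1, norm1. apply is_series_unique.
  pose proof (Series_correct _ (xl_ex U Hn H0)) as Hs.
  pose proof (is_series_minus _ _ _ _ Hs (fin_series (fun i => X U (S m) i) m ltac:(intros i Hi; rewrite X_eq; destruct (Nat.ltb_spec i (S m)); [lia|reflexivity]))) as H.
  rewrite (sum_n_ext_loc _ (xl U)) in H.
  eapply is_series_ext; [|exact H]. intros i. change plus with Rplus. change opp with Ropp.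
  assert (E := X_eq U (S m) i). cbv beta. rewrite E. destruct Nat.ltb.
  { replace (xl U i + - xl U i) with 0 by ring. rewrite Rminus_eq_0, Rabs_R0. reflexivity. }
  replace (xl U i + - 0) with (xl U i) by ring. rewrite Rminus_0_r. symmetry. apply Rabs_pos_eq, xl_nonneg.
  intros i Hi. rewrite X_eq. destruct (Nat.ltb_spec i (S m)); [reflexivity|lia].
Qed.

Lemma tail_small U : (forall x, U x -> norm1 x < 1) -> U zero_seq -> forall eps, 0 < eps ->
  exists N, forall n, (N <= n)%nat -> dist1 (xl U) (X U n) < eps.
Proof.
  intros Hn H0 eps He.
  pose proof (Series_correct _ (xl_ex U Hn H0)) as Hs. apply series_lim, is_lim_seq_spec in Hs.
  destruct (Hs (mkposreal eps He)) as [N HN]. exists (S N). intros n Hn'.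
  destruct n. lia. rewrite tail_dist; auto. specialize (HN n ltac:(lia)). simpl in HN.
  rewrite Rabs_minus_sym in HN. eapply Rle_lt_trans; [apply Rle_abs|exact HN].
Qed.

Theorem lemma2p2 :
  ~ exists U : (nat -> R) -> Prop,
      (forall x, U x -> inM x) /\
      openM U /\ closedM U /\
      U zero_seq /\
      (forall x, U x -> norm1 x < 1).
Proof.
  intros [U [HUM [Hop [Hcl [H0 Hn]]]]].
  assert (Hx : U (xl U)).
  { apply NNPP. intros Hnot.
    destruct (Hcl (xl U) (conj (xl_inM U Hn H0) Hnot)) as [eps [He Heps]].
    destruct (tail_small U Hn H0 eps He) as [N HN].
    destruct (Heps (X U N) (X_inM U N) (HN N (le_n _))) as [_ Hc].
    exact (Hc (X_U U H0 N)). }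
  destruct (Hop _ Hx) as [eps [He Heps]].
  destruct (pow_lt_1_zero (/2) ltac:(rewrite Rabs_pos_eq; lra) (eps/2) ltac:(lra)) as [j Hj].
  specialize (Hj j (le_n _)). rewrite Rabs_pos_eq in Hj by (apply pow_le; lra).
  rewrite <- Rinv_pow in Hj by lra.
  destruct (tail_small U Hn H0 (eps/2) ltac:(lra)) as [N1 HN1].
  pose proof (ex_series_lim_0 _ (xl_ex U Hn H0)) as Hl. apply is_lim_seq_spec in Hl.
  assert (Hp : 0 < / 2 ^ S j) by (apply Rinv_0_lt_compat, pow_lt; lra).
  destruct (Hl (mkposreal _ Hp)) as [N2 HN2].
  set (n := (N1 + S j + N2)%nat).
  assert (HP : P U (X U n) j).
  { intros z Hz Hd. apply Heps; auto.
    eapply Rle_lt_trans. apply (dist_triang _ (X U n)).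
    apply (xl_inM U Hn H0). apply (X_inM U n). apply Hz.
    specialize (HN1 n ltac:(unfold n; lia)). lra. }
  pose proof (fsel_min U (X U n) j n HP ltac:(unfold n; lia)) as Hf.
  specialize (HN2 n ltac:(unfold n; lia)). simpl in HN2.
  rewrite Rminus_0_r, xl_vstep in HN2. unfold vstep in HN2.
  destruct (Nat.ltb_spec (fsel U (X U n) n) n); [|unfold n in *; lia].
  assert (Hq : 0 < / 2 ^ S (fsel U (X U n) n)) by (apply Rinv_0_lt_compat, pow_lt; lra).
  rewrite Rabs_pos_eq in HN2 by lra.
  assert (H2 : 2 ^ S (fsel U (X U n) n) <= 2 ^ S j) by (apply Rle_pow; [lra|lia]).
  apply Rinv_le_contravar in H2. 2: apply pow_lt; lra.
  simpl in H2. simpl in HN2. exact (Rlt_not_le _ _ HN2 H2).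
Qed.
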